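(* Let $k$ be a positive integer and let $\mathcal A$ be an incremental clustering algorithm which, given $k$ and the points of a finite distance space $(\mathcal X,d)$ in some order, maintains (and finally outputs) a list of $\ell$ centers chosen from the points seen so far. Suppose that for every finite distance space $(\mathcal X,d)$, every ordering of $\mathcal X$, and every nice $k$-clustering $\mathcal C$ of $\mathcal X$, the final list of centers induces a refinement of $\mathcal C$. Then $\ell\ge 2^{k-1}$.
   Context: A distance space $(\mathcal X,d)$ is a set with a symmetric function $d:\mathcal X\times\mathcal X\to\mathbb R_{\ge0}$ with $d(x,x)=0$. A clustering of $\mathcal X$ is a set of nonempty, pairwise disjoint subsets whose union is $\mathcal X$; a $k$-clustering has exactly $k$ clusters. Write $x\sim_{\mathcal C}y$ if $x,y$ are in the same cluster and $x\not\sim_{\mathcal C}y$ otherwise. $\mathcal C$ is nice if for all $x,y,z\in\mathcal X$: $d(y,x)<d(z,x)$ whenever $x\sim_{\mathcal C}y$ and $x\not\sim_{\mathcal C}z$. A list $T=(t_1,\ldots,t_m)$ induces the clustering of $\mathcal X$ in which each $x$ is assigned to the index $i$ minimizing $d(x,t_i)$ (ties broken by smallest $i$), empty clusters discarded. A clustering $\mathcal C$ is a refinement of $\mathcal C'$ if $x\sim_{\mathcal C}y$ implies $x\sim_{\mathcal C'}y$ for all $x,y$. *)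

(* Defs.v *)
From Stdlib Require Import Reals.
From mathcomp Require Import all_boot.
Set Implicit Arguments. Unset Strict Implicit. Unset Printing Implicit Defensive.

Definition distance_space (X : finType) (d : X -> X -> R) : Prop :=
  (forall x y, Rle R0 (d x y)) /\ (forall x y, d x y = d y x) /\ (forall x, d x x = R0).

Definition is_k_clustering (X : finType) (P : {set {set X}}) (k : nat) : Prop :=
  partition P [set: X] /\ #|P| = k.

Definition same_cluster (X : finType) (P : {set {set X}}) (x y : X) : Prop :=
  exists C, C \in P /\ x \in C /\ y \in C.

Definition nice (X : finType) (d : X -> X -> R) (P : {set {set X}}) : Prop :=
  forall x y z, same_cluster P x y -> ~ same_cluster P x z -> Rlt (d y x) (d z x).

(* [assigned d T x i]: in the clustering induced by the list T = (t_0,...,t_{m-1}),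
   the point x goes to index i: i minimizes d(x,t_i), ties broken by smallest index. *)
Definition assigned (X : finType) (d : X -> X -> R) (T : seq X) (x : X) (i : nat) : Prop :=
  i < size T /\
  (forall j, j < size T -> Rle (d x (nth x T i)) (d x (nth x T j))) /\
  (forall j, j < i -> Rlt (d x (nth x T i)) (d x (nth x T j))).

(* The list T induces a clustering of X (i.e. every point is assigned, which just says
   T is nonempty) and this induced clustering is a refinement of P. *)
Definition induces_refinement (X : finType) (d : X -> X -> R) (T : seq X)
    (P : {set {set X}}) : Prop :=
  (forall x, exists i, assigned d T x i) /\
  (forall x y i, assigned d T x i -> assigned d T y i -> same_cluster P x y).

(* An incremental (center-based) algorithm.  Its state is the current list of centers
   T = (t_0,...,t_{m-1}).  On receiving a new point x it sees only the distances among
   the points of  rcons T x  (indexed by 'I_m.+1, index m being x) and returns the new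
   list of centers as a list of indices into  rcons T x . *)
Definition inc_alg := forall m : nat, ('I_m.+1 -> 'I_m.+1 -> R) -> seq 'I_m.+1.

Definition alg_step (X : finType) (d : X -> X -> R) (A : inc_alg) (T : seq X) (x : X)
    : seq X :=
  let U := rcons T x in
  [seq nth x U (val i) | i <- A (size T) (fun i j : 'I_(size T).+1 => d (nth x U i) (nth x U j))].

Definition alg_run (X : finType) (d : X -> X -> R) (A : inc_alg) (s : seq X) : seq X :=
  foldl (alg_step d A) [::] s.

(* Main.v *)
Require Import Defs.
From Stdlib Require Import Reals.
From mathcomp Require Import all_boot.
From Stdlib Require Import ClassicalEpsilon.
From mathcomp Require Import zify.

Set Implicit Arguments. Unset Strict Implicit. Unset Printing Implicit Defensive.

Fixpoint uu (s t : seq bool) : nat :=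
  match s, t with
  | a :: s', b :: t' => if a == b then (uu s' t').+1 else 0
  | _, _ => 0
  end.

Fixpoint flipat (j : nat) (s : seq bool) : seq bool :=
  match s with
  | [::] => [::]
  | a :: s' => match j with 0 => (~~ a) :: s' | j'.+1 => a :: flipat j' s' end
  end.

Lemma uu_sym s t : uu s t = uu t s.
Proof. elim: s t => [|a s IH] [|b t] //=; rewrite eq_sym IH; by case: (b == a). Qed.

Lemma uu_refl s : uu s s = size s.
Proof. by elim: s => [|a s IH] //=; rewrite eqxx IH. Qed.

Lemma uu_le s t : uu s t <= size s.
Proof. elim: s t => [|a s IH] [|b t] //=; case: (a == b) => //; exact: IH. Qed.

Lemma uu_eq s t : size s = size t -> uu s t = size s -> s = t.
Proof.
elim: s t => [|a s IH] [|b t] //= [Hs]; case: eqP => [-> [H]|//].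
by rewrite (IH t Hs H).
Qed.

Lemma uu_A p x y : size x = size p -> size y = size p -> uu x p = uu y p ->
  uu x p < size p -> uu x p < uu x y.
Proof.
elim: p x y => [|b p IH] [|a x] [|c y] //= [Hx] [Hy].
case: (eqP (x:=a)) => [->|Hab]; case: (eqP (x:=c)) => [->|Hcb] //=.
- rewrite eqxx => -[E] Hl; rewrite ltnS; apply: IH => //.
- move=> _ _; have -> : a = c by case: a c b Hab Hcb => [] [] [] // H1 H2; exfalso; (apply: H1 || apply: H2).
  by rewrite eqxx.
Qed.

Lemma uu_B p x z : uu x p <> uu z p -> uu x z = minn (uu x p) (uu z p).
Proof.
elim: p x z => [|b p IH] [|a x] [|c z] //=.
- by rewrite min0n.
case: (a =P b) => [->|Hab]; case: (c =P b) => [->|Hcb] //=.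
- rewrite eqxx => H; rewrite minnSS IH //; by move=> E; apply: H; rewrite E.
- move=> _; case: eqP => // E; by subst.
- move=> _; case: eqP => // E; by subst.
Qed.

Lemma flip_size j p : size (flipat j p) = size p.
Proof. by elim: p j => [|a p IH] [|j] //=; rewrite IH. Qed.

Lemma flip_uu j p : j < size p -> uu (flipat j p) p = j.
Proof.
elim: p j => [|a p IH] [|j] //=.
- by case: a.
- by rewrite eqxx ltnS => /IH ->.
Qed.

Section Main.
Variable n : nat.
Local Notation X := (n.-tuple bool).
Definition uX (x y : X) := uu (val x) (val y).
Definition dX (x y : X) : R := INR (n - uX x y).

Lemma uX_le (x y : X) : uX x y <= n.
Proof. by rewrite -(size_tuple x) /uX uu_le. Qed.

Lemma uX_refl (x : X) : uX x x = n.
Proof. by rewrite /uX uu_refl size_tuple. Qed.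

Lemma uX_eq (x y : X) : uX x y = n -> x = y.
Proof.
move=> H; apply: val_inj; apply: uu_eq; rewrite !size_tuple //.
Qed.

Lemma dX_dist : distance_space dX.
Proof.
split; [|split].
- move=> x y; apply: pos_INR.
- by move=> x y; rewrite /dX /uX uu_sym.
- by move=> x; rewrite /dX uX_refl subnn.
Qed.

Definition cl (p : X) (j : 'I_n.+1) : {set X} := [set x | uX x p == j].
Definition PP (p : X) : {set {set X}} := [set cl p j | j : 'I_n.+1].

Lemma wit (p : X) (j : 'I_n.+1) : exists x : X, uX x p = j.
Proof.
case: (ltngtP j n) => Hj.
- have Hs : size (flipat j p) == n by rewrite flip_size size_tuple.
  exists (Tuple Hs); rewrite /uX /= flip_uu // size_tuple //.
- by have := ltn_ord j; lia.
- by exists p; rewrite uX_refl.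
Qed.

Lemma same_clP (p x y : X) : same_cluster (PP p) x y <-> uX x p = uX y p.
Proof.
split.
- move=> [C [/imsetP [j _ ->] [Hx Hy]]].
  by move: Hx Hy; rewrite !inE => /eqP -> /eqP ->.
- move=> E; have Hl : uX x p < n.+1 by rewrite ltnS uX_le.
  exists (cl p (Ordinal Hl)); split; first by apply/imsetP; exists (Ordinal Hl).
  by rewrite !inE /= E eqxx.
Qed.

Lemma clust (p : X) : is_k_clustering (PP p) n.+1.
Proof.
have inj : injective (cl p).
  move=> i j E; have [x Hx] := wit p i.
  have : x \in cl p i by rewrite inE Hx.
  rewrite E inE Hx => /eqP H; exact: val_inj.
split; last by rewrite card_imset // card_ord.
apply/and3P; split.
- apply/eqP/setP => x; rewrite in_setT; apply/bigcupP.
  have Hl : uX x p < n.+1 by rewrite ltnS uX_le.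
  exists (cl p (Ordinal Hl)); first by apply/imsetP; exists (Ordinal Hl).
  by rewrite inE.
- apply/trivIsetP => A B /imsetP [i _ ->] /imsetP [j _ ->] Hne.
  rewrite -setI_eq0; apply/eqP/setP => x; rewrite !inE.
  apply/negbTE/negP => /andP [/eqP H1 /eqP H2]; move/negP: Hne; apply.
  apply/eqP; congr cl; apply: ord_inj; by rewrite -H1 -H2.
- apply/negP => /imsetP [j _ E]; have [x Hx] := wit p j.
  have : x \in cl p j by rewrite inE Hx.
  by rewrite -E inE.
Qed.

Lemma nice_PP (p : X) : nice dX (PP p).
Proof.
move=> x y z /same_clP Hxy Hxz.
have Hne : uX x p <> uX z p by move=> E; apply: Hxz; apply/same_clP.
have B : uX x z = minn (uX x p) (uX z p) by apply: uu_B.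
have Axy : uX x p <= uX x y /\ (uX x p < n -> uX x p < uX x y).
  case: (ltnP (uX x p) n) => Hl.
  - have H : uX x p < uX x y.
      apply: uu_A; rewrite ?size_tuple //.
    split; [exact: ltnW | by []].
  - have Ex : uX x p = n by have := uX_le x p; lia.
    have Ey : uX y p = n by rewrite -Hxy.
    have Exy : x = y by rewrite (uX_eq Ex) (uX_eq Ey).
    rewrite -Exy uX_refl Ex; split => //.
have Hlt : uX x z < uX x y.
  have := uX_le z p; have := uX_le x p; move: Axy B Hne; case => A1 A2.
  case: (ltngtP (uX x p) (uX z p)) => H B Hne H1 H2.
  - have : uX x p < n by lia.
    by move/A2; rewrite B; lia.
  - by rewrite B; lia.
  - by [].
have Hb := uX_le x y.
have Hxy' : uX y x = uX x y by rewrite /uX uu_sym.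
have Hxz' : uX z x = uX x z by rewrite /uX uu_sym.
rewrite /dX Hxy' Hxz'; apply: lt_INR; apply/ltP; lia.
Qed.

End Main.

Theorem mainTheorem9 (k l : nat) (hk : 0 < k) (A : inc_alg)
  (hsize : forall m (D : 'I_m.+1 -> 'I_m.+1 -> R), size (A m D) <= l)
  (hA : forall (X : finType) (d : X -> X -> R), distance_space d ->
        forall s : seq X, perm_eq s (enum X) ->
        forall P : {set {set X}}, is_k_clustering P k -> nice d P ->
        induces_refinement d (alg_run d A s) P) :
  2 ^ (k - 1) <= l.
Proof.
case: k hk hA => [//|n] _ hA; rewrite subn1 /=.
set T := alg_run (@dX n) A (enum {: n.-tuple bool}).
have HR p : induces_refinement (@dX n) T (PP p).
  have := hA _ _ (@dX_dist n) (enum {: n.-tuple bool}) _ _ (@clust n p) (@nice_PP n p).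
  by apply; apply: perm_refl.
have hex x : {i | assigned (@dX n) T x i}.
  apply: constructive_indefinite_description; exact: (HR x).1.
pose h x : 'I_(size T) := Ordinal (proj1 (proj2_sig (hex x))).
have hinj : injective h.
  move=> x y E.
  have Hx := proj2_sig (hex x); have Hy := proj2_sig (hex y).
  have E' : sval (hex x) = sval (hex y) by move/(congr1 val): E.
  rewrite E' in Hx.
  have /same_clP := (HR x).2 _ _ _ Hx Hy.
  rewrite uX_refl => /esym /uX_eq; by [].
have Hc := leq_card h hinj.
rewrite card_ord card_tuple card_bool in Hc.
apply: (leq_trans Hc); rewrite /T /alg_run.
case/lastP: (enum {: n.-tuple bool}) => [//|s x]; rewrite foldl_rcons /alg_step size_map.
exact: hsize.
Qed.
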